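(* If $f\ge 0$ is a random variable, then its quantization $\widehat f$ is a positive operator on $H$, i.e. $\langle\widehat f u,u\rangle\ge 0$ for all $u\in H$.
   Context: $(\Omega,\mathcal{A},\nu)$ is a probability space and $H=L_2(\Omega,\mathcal{A},\nu)$ is the complex Hilbert space with inner product $\langle f,g\rangle=\int\bar f g\,d\nu$. A random variable is a real-valued $f\in H$. For a random variable $f\ge 0$, its quantization $\widehat f$ is the operator on $H$ given by $(\widehat f u)(y)=\int\min[f(x),f(y)]\,u(x)\,d\nu(x)$. *)

(* Defs.v *)
From HB Require Import structures.
From mathcomp Require Import all_boot all_order all_algebra.
From mathcomp Require Import all_classical all_reals all_analysis.
From mathcomp Require Import complex.
Set Implicit Arguments. Unset Strict Implicit. Unset Printing Implicit Defensive.
Import Order.TTheory GRing.Theory Num.Theory.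
Local Open Scope ring_scope.
Local Open Scope classical_set_scope.

Section Defs.
Context {d : measure_display} {T : measurableType d} {R : realType}.
Variable P : probability T R.

Definition cintegral (g : T -> R[i]) : R[i] :=
  Complex (Rintegral P setT (fun x => complex.Re (g x)))
          (Rintegral P setT (fun x => complex.Im (g x))).

(* u : Omega -> C represents an element of H = L_2(Omega, A, nu) (complex). *)
Definition L2c (u : T -> R[i]) : Prop :=
  measurable_fun setT (fun x => complex.Re (u x)) /\
  measurable_fun setT (fun x => complex.Im (u x)) /\
  P.-integrable setT (fun x => ((complex.Re (u x)) ^+ 2 + (complex.Im (u x)) ^+ 2)%:E).

Definition real_rv_L2 (f : T -> R) : Prop :=
  measurable_fun setT f /\ P.-integrable setT (fun x => (f x ^+ 2)%:E).

Definition cinner (g u : T -> R[i]) : R[i] :=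
  cintegral (fun y => conjc (g y) * u y).

Definition quantization (f : T -> R) (u : T -> R[i]) : T -> R[i] :=
  fun y => cintegral (fun x => Complex (Num.min (f x) (f y)) 0 * u x).

End Defs.

(* Main.v *)
Require Import Defs.
From HB Require Import structures.
From mathcomp Require Import all_boot all_order all_algebra.
From mathcomp Require Import all_classical all_reals all_analysis.
From mathcomp Require Import complex.
From mathcomp Require Import ring lra.
Import Order.TTheory GRing.Theory Num.Theory measurable_realfun.
Local Open Scope ring_scope.
Local Open Scope classical_set_scope.


Section L2.
Context {d : measure_display} {T : measurableType d} {R : realType}.
Variable P : probability T R.

Lemma L2_int (h : T -> R) : measurable_fun setT h ->
  P.-integrable setT (fun x => (h x ^+ 2)%:E) -> P.-integrable setT (EFin \o h).
Proof.
move=> mh ih.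
apply: (le_integrable measurableT (g := fun x => (1 + h x ^+ 2)%:E)).
- by apply/measurable_EFinP.
- move=> x _ /=; rewrite lee_fin [X in _ <= X]ger0_norm ?addr_ge0 ?sqr_ge0 //.
  have := real_normK (num_real (h x)); set a := `|h x|; move=> ha.
  rewrite -ha; have : 0 <= a by exact: normr_ge0.
  nra.
- have := integrableD measurableT (finite_measure_integrable_cst P (1:R) measurableT) ih.
  move=> H; apply: eq_integrable H => // x _ /=; by rewrite EFinD.
Qed.

Lemma L2_mul (h k : T -> R) : measurable_fun setT h -> measurable_fun setT k ->
  P.-integrable setT (fun x => (h x ^+ 2)%:E) ->
  P.-integrable setT (fun x => (k x ^+ 2)%:E) ->
  P.-integrable setT (fun x => (h x * k x)%:E).
Proof.
move=> mh mk ih ik.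
apply: (le_integrable measurableT (g := fun x => (h x ^+ 2 + k x ^+ 2)%:E)).
- by apply/measurable_EFinP; exact: measurable_funM.
- move=> x _ /=; rewrite lee_fin [X in _ <= X]ger0_norm ?addr_ge0 ?sqr_ge0 //.
  rewrite normrM.
  have := real_normK (num_real (h x)); have := real_normK (num_real (k x)).
  set a := `|h x|; set b := `|k x|; move=> hb ha.
  rewrite -ha -hb; have : 0 <= a by exact: normr_ge0.
  have : 0 <= b by exact: normr_ge0.
  nra.
- have := integrableD measurableT ih ik.
  move=> H; apply: eq_integrable H => // x _ /=; by rewrite EFinD.
Qed.

End L2.

Section sep.
Context {d : measure_display} {T : measurableType d} {R : realType}.
Variable P : probability T R.

Lemma sep_int (a b : T -> R) : measurable_fun setT a -> measurable_fun setT b ->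
  P.-integrable setT (EFin \o a) -> P.-integrable setT (EFin \o b) ->
  (P \x P)%E.-integrable setT (fun p : T * T => (a p.1 * b p.2)%:E).
Proof.
move=> ma mb ia ib.
have mf : measurable_fun setT (fun p : T * T => (a p.1 * b p.2)%:E).
  apply/measurable_EFinP; apply: measurable_funM.
  - exact: measurableT_comp ma measurable_fst.
  - exact: measurableT_comp mb measurable_snd.
apply/(integrable12ltyP P P mf) => /=.
have fb : (\int[P]_y `|b y|%:E)%E \is a fin_num.
  by have := integrable_fin_num measurableT (integrable_abse ib).
have fa : (\int[P]_y `|a y|%:E)%E \is a fin_num.
  by have := integrable_fin_num measurableT (integrable_abse ia).
under eq_integral => x _.
  under eq_integral do rewrite normrM EFinM.
  rewrite integralZl //; last exact: integrable_abse ib.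
  rewrite -(fineK fb) -EFinM.
  over.
rewrite /=. under eq_integral do rewrite EFinM.
rewrite integralZr //; last exact: integrable_abse ia.
by rewrite -(fineK fa) -EFinM ltry.
Qed.

End sep.

Section kernel.
Context {d : measure_display} {T : measurableType d} {R : realType}.
Variable P : probability T R.
Variable f : T -> R.
Hypothesis mf : measurable_fun setT f.
Hypothesis if2 : P.-integrable setT (fun x => (f x ^+ 2)%:E).

Lemma min_le (a b c : R) : `|Num.min a b * c| <= a ^+ 2 + c ^+ 2 + b ^+ 2.
Proof.
rewrite /Num.min; case: ifP => _; rewrite normrM;
  have := real_normK (num_real c); set y := `|c|; move=> <-;
  have y0 : 0 <= y by exact: normr_ge0.
- have := real_normK (num_real a); set x := `|a|; move=> <-.
  have x0 : 0 <= x by exact: normr_ge0.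
  by have := sqr_ge0 b; nra.
- have := real_normK (num_real b); set x := `|b|; move=> <-.
  have x0 : 0 <= x by exact: normr_ge0.
  by have := sqr_ge0 a; nra.
Qed.

Lemma intK (g : T -> R) y : measurable_fun setT g ->
  P.-integrable setT (fun x => (g x ^+ 2)%:E) ->
  P.-integrable setT (fun x => (Num.min (f x) (f y) * g x)%:E).
Proof.
move=> mg ig2.
apply: (le_integrable measurableT (g := fun x => (f x ^+ 2 + g x ^+ 2 + f y ^+ 2)%:E)).
- apply/measurable_EFinP; apply: measurable_funM => //.
  by apply: measurable_minr => //; exact: measurable_cst.
- move=> x _ /=; rewrite lee_fin [X in _ <= X]ger0_norm; last by rewrite !addr_ge0 ?sqr_ge0.
  exact: min_le.
- have := integrableD measurableT (integrableD measurableT if2 ig2)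
    (finite_measure_integrable_cst P (f y ^+ 2) measurableT).
  by move=> H; apply: eq_integrable H => // x _ /=; rewrite !EFinD.
Qed.


Lemma min_le2 (a b c e : R) :
  `|Num.min a b * c * e| <= `|e| * `|a * c| + `|b * e| * `|c|.
Proof.
rewrite /Num.min; case: ifP => _.
- rewrite (_ : `|a * c * e| = `|e| * `|a * c|); last by rewrite !normrM; ring.
  by rewrite lerDl mulr_ge0.
- rewrite (_ : `|b * c * e| = `|b * e| * `|c|); last by rewrite !normrM; ring.
  by rewrite lerDr mulr_ge0.
Qed.

Lemma int_norm (a : T -> R) : P.-integrable setT (fun x => (a x)%:E) ->
  P.-integrable setT (EFin \o (fun x => `|a x|)).
Proof. by move/integrable_abse; apply: eq_integrable. Qed.

Definition G (g : T -> R) y := Rintegral P setT (fun x => Num.min (f x) (f y) * g x).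

Lemma G_E (g h : T -> R) y : measurable_fun setT g ->
  P.-integrable setT (fun x => (g x ^+ 2)%:E) ->
  ((G g y) * h y)%:E = (\int[P]_x (Num.min (f x) (f y) * g x * h y)%:E)%E.
Proof.
move=> mg ig2; have iK := intK g y mg ig2.
have fn := integrable_fin_num measurableT iK.
rewrite /G /Rintegral EFinM fineK //.
under [RHS]eq_integral do rewrite EFinM.
by rewrite integralZr.
Qed.

Variables g h : T -> R.
Hypothesis mg : measurable_fun setT g.
Hypothesis ig2 : P.-integrable setT (fun x => (g x ^+ 2)%:E).
Hypothesis mh : measurable_fun setT h.
Hypothesis ih2 : P.-integrable setT (fun x => (h x ^+ 2)%:E).

Lemma intProd : (P \x P)%E.-integrable setT
  (fun p : T * T => (Num.min (f p.2) (f p.1) * g p.2 * h p.1)%:E).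
Proof.
have mn (a : T -> R) : measurable_fun setT a -> measurable_fun setT (fun x => `|a x|).
  by move=> ma; exact: measurableT_comp (@normr_measurable R setT) ma.
have i1 := sep_int P _ _ (mn _ mh) (mn _ (measurable_funM mf mg))
  (int_norm _ (L2_int P _ mh ih2)) (int_norm _ (L2_mul P _ _ mf mg if2 ig2)).
have i2 := sep_int P _ _ (mn _ (measurable_funM mf mh)) (mn _ mg)
  (int_norm _ (L2_mul P _ _ mf mh if2 ih2)) (int_norm _ (L2_int P _ mg ig2)).
apply: (le_integrable measurableT _ _ (integrableD measurableT i1 i2)).
- apply/measurable_EFinP; apply: measurable_funM; last exact: measurableT_comp mh measurable_fst.
  apply: measurable_funM; last exact: measurableT_comp mg measurable_snd.
  apply: measurable_minr.
  + exact: measurableT_comp mf measurable_snd.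
  + exact: measurableT_comp mf measurable_fst.
- move=> [x y] _ /=; rewrite lee_fin [X in _ <= X]ger0_norm; last first.
    by rewrite addr_ge0 // mulr_ge0.
  exact: min_le2.
Qed.


Lemma int_Gh : P.-integrable setT (fun y => (G g y * h y)%:E).
Proof.
have := integrable_fubini_F intProd.
by apply: eq_integrable => // y _; rewrite /fubini_F /= G_E.
Qed.

Lemma Gsym : Rintegral P setT (fun y => G g y * h y) = Rintegral P setT (fun x => G h x * g x).
Proof.
rewrite /Rintegral; congr fine.
under eq_integral do rewrite G_E //.
under [RHS]eq_integral do rewrite G_E //.
rewrite (Fubini intProd) /=.
apply: eq_integral => x _; apply: eq_integral => y _.
by rewrite minC; congr (_%:E); ring.
Qed.

End kernel.


Section layer.
Context {d : measure_display} {T : measurableType d} {R : realType}.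
Variable P : probability T R.
Variable F : T -> R.
Hypothesis mF : measurable_fun setT F.
Hypothesis F0 : forall x, 0 <= F x.

Let Lm := (@lebesgue_measure R).

Definition ind (x : T) (t : R) : R := \1_(`[0, F x[) t.

Let B : set (T * R) := [set p | 0 <= p.2] `&` [set p | p.2 < F p.1].

Lemma mB : measurable B.
Proof.
apply: measurableI.
- have := @measurable_fun_ler _ _ _ setT (fun _ => 0) snd (measurable_cst (0:R)) (@measurable_snd _ _ T R) measurableT [set true] I.
  rewrite setTI; congr (measurable _); apply/seteqP; split => p /=; by [move=> ->|].
- have := @measurable_fun_ltr _ _ _ setT snd (fun p => F p.1) (@measurable_snd _ _ T R) (measurableT_comp mF measurable_fst) measurableT [set true] I.
  rewrite setTI; congr (measurable _); apply/seteqP; split => p /=; by [move=> ->|].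
Qed.

Lemma ind_indic : (fun p : T * R => ind p.1 p.2) = \1_B.
Proof.
apply/funext => p; rewrite /ind /B !indicE; congr ((nat_of_bool _)%:R).
apply/idP/idP.
- by move/set_mem; rewrite /= in_itv /= => /andP[h1 h2]; apply/mem_set.
- by move/set_mem => [h1 h2]; apply/mem_set; rewrite /= in_itv /= h1 h2.
Qed.

Lemma mind : measurable_fun setT (fun p : T * R => ind p.1 p.2).
Proof. by rewrite ind_indic; apply: measurable_indic; exact: mB. Qed.


Lemma ind_min x y : (\int[Lm]_t (ind x t * ind y t)%:E = (Num.min (F x) (F y))%:E)%E.
Proof.
have -> : (fun t => (ind x t * ind y t)%:E) = (fun t => (\1_(`[0, Num.min (F x) (F y)[) t)%:E).
  apply/funext => t; rewrite /ind; congr (_%:E).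
  rewrite -[LHS]/((\1_`[0, F x[ \* \1_`[0, F y[) t) -indicI; congr (\1_ _ t).
  apply/seteqP; split => s /=; rewrite !in_itv /=.
  - by move=> [/andP[-> h1] /andP[_ h2]]; rewrite lt_min h1 h2.
  - by rewrite lt_min => /andP[-> /andP[-> ->]].
rewrite (@integral_indic _ _ _ Lm setT measurableT); last exact: measurable_itv.
rewrite setIT /Lm; apply: eq_trans (lebesgue_measure_itv _) _ => /=.
have m0 : 0 <= Num.min (F x) (F y) by rewrite le_min !F0.
case: ifPn => [_|]; first by rewrite oppr0 adde0.
rewrite -leNgt => h; congr (_%:E); apply/eqP; rewrite eq_le m0 /=; by rewrite lee_fin in h.
Qed.


Lemma mind1 x : measurable_fun setT (ind x).
Proof. by apply: measurable_indic; exact: measurable_itv. Qed.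

Lemma ind_ge0 x t : 0 <= ind x t.
Proof. by rewrite /ind indicE. Qed.

Lemma ind_le1 x t : ind x t <= 1.
Proof. by rewrite /ind indicE; case: (_ \in _). Qed.

Lemma ind_int x : (\int[Lm]_t (ind x t)%:E = (F x)%:E)%E.
Proof.
rewrite -[RHS](_ : (Num.min (F x) (F x))%:E = _); last by rewrite minxx.
rewrite -ind_min; apply: eq_integral => t _; congr (_%:E).
by rewrite /ind indicE; case: (_ \in _); rewrite ?mulr1 ?mulr0.
Qed.

Lemma int_indind x y : Lm.-integrable setT (fun t => (ind x t * ind y t)%:E).
Proof.
apply/integrableP; split.
  by apply/measurable_EFinP; apply: measurable_funM; exact: mind1.
under eq_integral do rewrite gee0_abs ?lee_fin ?mulr_ge0 ?ind_ge0//.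
by rewrite ind_min ltry.
Qed.

Lemma int_ind x : Lm.-integrable setT (fun t => (ind x t)%:E).
Proof.
apply/integrableP; split; first by apply/measurable_EFinP; exact: mind1.
under eq_integral do rewrite gee0_abs ?lee_fin ?ind_ge0//.
by rewrite ind_int ltry.
Qed.


Variable g : T -> R.
Hypothesis mg : measurable_fun setT g.
Hypothesis ig : P.-integrable setT (EFin \o g).
Hypothesis iFg : P.-integrable setT (fun x => (F x * g x)%:E).

Lemma int_indg : (P \x Lm)%E.-integrable setT (fun p : T * R => (ind p.1 p.2 * g p.1)%:E).
Proof.
have mf : measurable_fun setT (fun p : T * R => (ind p.1 p.2 * g p.1)%:E).
  apply/measurable_EFinP; apply: measurable_funM; first exact: mind.
  exact: measurableT_comp mg measurable_fst.
apply/(integrable12ltyP P Lm mf) => /=.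
under eq_integral => x _.
  under eq_integral do rewrite normrM (ger0_norm (ind_ge0 _ _)) EFinM.
  rewrite ge0_integralZr//=; first last.
  - by move=> t _; rewrite lee_fin ind_ge0.
  - by apply/measurable_EFinP; exact: mind1.
  rewrite ind_int -EFinM -(ger0_norm (F0 x)) -normrM.
  over.
by move/integrableP : iFg => [_]; apply: le_lt_trans; rewrite le_eqVlt eqxx.
Qed.


Definition A (t : R) := (\int[P]_x (ind x t * g x)%:E)%E.

Lemma mA : measurable_fun setT A.
Proof. exact: (measurable_fubini_G int_indg). Qed.

Lemma mind2 t : measurable_fun setT (fun x => ind x t).
Proof.
have mp : measurable_fun setT (fun x : T => (x, t)).
  by apply/measurable_fun_pairP; split; [exact: measurable_id|exact: measurable_cst].
exact: (measurableT_comp mind mp).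
Qed.

Lemma int_indg1 t : P.-integrable setT (fun x => (ind x t * g x)%:E).
Proof.
apply: (le_integrable measurableT _ _ ig).
  by apply/measurable_EFinP; apply: measurable_funM => //; exact: mind2.
move=> x _ /=; rewrite lee_fin normrM (ger0_norm (ind_ge0 _ _)).
by rewrite ler_piMl ?ind_le1.
Qed.

Lemma A_fin t : A t \is a fin_num.
Proof. exact: integrable_fin_num (int_indg1 t). Qed.

Definition Cg := fine (\int[P]_x `|g x|%:E)%E.

Lemma A_le t : (`|A t| <= Cg%:E)%E.
Proof.
rewrite /Cg fineK; last first.
  have := integrable_fin_num measurableT (integrable_abse ig); by [].
apply: le_trans (le_abse_integral _ _ _) _ => //.
  by apply/measurable_EFinP; apply: measurable_funM => //; exact: mind2.
apply: ge0_le_integral => //.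
- apply: measurableT_comp => //.
  by apply/measurable_EFinP; apply: measurable_funM => //; exact: mind2.
- by apply/measurable_EFinP; apply: measurableT_comp.
- move=> x _; rewrite /= lee_fin normrM (ger0_norm (ind_ge0 _ _)).
  by rewrite ler_piMl ?ind_le1.
Qed.


Lemma stepA y : (\int[P]_x (Num.min (F x) (F y) * g x * g y)%:E =
  \int[P]_x \int[Lm]_t (ind x t * ind y t * (g x * g y))%:E)%E.
Proof.
apply: eq_integral => x _.
under [RHS]eq_integral do rewrite EFinM.
by rewrite integralZr //; [rewrite ind_min -EFinM mulrA | exact: int_indind].
Qed.

Lemma intPsi y : (P \x Lm)%E.-integrable setT
  (fun p : T * R => (ind p.1 p.2 * ind y p.2 * (g p.1 * g y))%:E).
Proof.
apply: (le_integrable measurableT _ _ (integrableZr measurableT (g y) int_indg)).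
  apply/measurable_EFinP; apply: measurable_funM; last apply: measurable_funM.
  - apply: measurable_funM; first exact: mind.
    exact: measurableT_comp (mind1 y) measurable_snd.
  - exact: measurableT_comp mg measurable_fst.
  - exact: measurable_cst.
move=> [x t] _ /=; rewrite lee_fin !normrM !(ger0_norm (ind_ge0 _ _)).
rewrite [ind x t * ind y t]mulrC -!mulrA ler_piMl ?ind_le1 //.
by rewrite !mulr_ge0 ?ind_ge0.
Qed.

Lemma stepC y t : (\int[P]_x (ind x t * ind y t * (g x * g y))%:E =
  A t * (ind y t * g y)%:E)%E.
Proof.
have E x : (ind x t * ind y t * (g x * g y))%:E = ((ind x t * g x)%:E * (ind y t * g y)%:E)%E.
  by rewrite -EFinM; congr (_%:E); ring.
under eq_integral do rewrite E.
by rewrite integralZr //; exact: int_indg1.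
Qed.

Lemma intD : (P \x Lm)%E.-integrable setT
  (fun p : T * R => A p.2 * (ind p.1 p.2 * g p.1)%:E)%E.
Proof.
apply: (le_integrable measurableT _ _ (integrableZr measurableT Cg int_indg)).
  apply: emeasurable_funM; first exact: measurableT_comp mA measurable_snd.
  apply/measurable_EFinP; apply: measurable_funM; first exact: mind.
  exact: measurableT_comp mg measurable_fst.
have Cg0 : 0 <= Cg by rewrite /Cg fine_ge0 // integral_ge0.
move=> [x t] _ /=; rewrite abseM /= (normrM _ Cg) (ger0_norm Cg0) (mulrC _ Cg) [X in (_ <= X)%E]EFinM.
by apply: lee_pmul => //; exact: A_le.
Qed.

Lemma stepE t : (\int[P]_y (A t * (ind y t * g y)%:E) = A t * A t)%E.
Proof.
rewrite -[in LHS](fineK (A_fin t)) integralZl //; last exact: int_indg1.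
by rewrite fineK ?A_fin.
Qed.

Lemma layer_ge0 : (0 <= \int[P]_y \int[P]_x (Num.min (F x) (F y) * g x * g y)%:E)%E.
Proof.
have -> : (\int[P]_y \int[P]_x (Num.min (F x) (F y) * g x * g y)%:E =
   \int[P]_y \int[Lm]_t (A t * (ind y t * g y)%:E))%E.
  apply: eq_integral => y _.
  rewrite stepA (Fubini (intPsi y)).
  by apply: eq_integral => t _; rewrite stepC.
rewrite (Fubini intD).
under eq_integral do rewrite stepE.
by apply: integral_ge0 => t _; rewrite -expe2 sqre_ge0.
Qed.


End layer.

Section pos.
Context {d : measure_display} {T : measurableType d} {R : realType}.
Variable P : probability T R.

Lemma Gpos (f g : T -> R) : measurable_fun setT f ->
  P.-integrable setT (fun x => (f x ^+ 2)%:E) ->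
  {ae P, forall x, 0 <= f x} ->
  measurable_fun setT g -> P.-integrable setT (fun x => (g x ^+ 2)%:E) ->
  0 <= Rintegral P setT (fun y => G P f g y * g y).
Proof.
move=> mf if2 hf0 mg ig2.
pose F x := Num.max (f x) 0.
have mF : measurable_fun setT F by apply: measurable_maxr => //; exact: measurable_cst.
have F0 x : 0 <= F x by rewrite le_max lexx orbT.
have iF2 : P.-integrable setT (fun x => (F x ^+ 2)%:E).
  apply: (le_integrable measurableT _ _ if2).
    by apply/measurable_EFinP; exact: measurable_funX.
  move=> x _ /=; rewrite lee_fin !ger0_norm ?sqr_ge0 //.
  rewrite /F maxEge; case: ifP => // h.
  by rewrite expr0n /= sqr_ge0.
have E : (\int[P]_y (G P f g y * g y)%:E = \int[P]_y (G P F g y * g y)%:E)%E.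
  apply: ae_eq_integral => //.
  - exact: (measurable_int _ (int_Gh P f mf if2 g g mg ig2 mg ig2)).
  - exact: (measurable_int _ (int_Gh P F mF iF2 g g mg ig2 mg ig2)).
  move: (hf0); apply: filterS => y fy0 _; congr (_ * _)%:E.
  rewrite /G /Rintegral; congr fine.
  apply: ae_eq_integral => //.
  - exact: (measurable_int _ (intK P f mf if2 g y mg ig2)).
  - exact: (measurable_int _ (intK P F mF iF2 g y mg ig2)).
  apply: filterS hf0 => x fx0 _.
  by rewrite /F !max_l.
rewrite /Rintegral; apply: fine_ge0; rewrite E.
under eq_integral do rewrite G_E //.
apply: layer_ge0 => //.
- exact: L2_int.
- exact: L2_mul.
Qed.

End pos.

Theorem theorem3p2 (d : measure_display) (T : measurableType d) (R : realType)
    (P : probability T R) (f : T -> R) :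
  real_rv_L2 P f ->
  {ae P, forall x, 0 <= f x} ->
  forall u : T -> R[i], L2c P u ->
    0 <= cinner P (quantization P f u) u.
Proof.
move=> [mf if2] hf0 u [ma [mb iab]].
pose a x := complex.Re (u x).
pose b x := complex.Im (u x).
have ia2 : P.-integrable setT (fun x => (a x ^+ 2)%:E).
  apply: (le_integrable measurableT _ _ iab).
    by apply/measurable_EFinP; exact: measurable_funX.
  move=> x _ /=; rewrite lee_fin !ger0_norm ?addr_ge0 ?sqr_ge0 //.
  by rewrite lerDl sqr_ge0.
have ib2 : P.-integrable setT (fun x => (b x ^+ 2)%:E).
  apply: (le_integrable measurableT _ _ iab).
    by apply/measurable_EFinP; exact: measurable_funX.
  move=> x _ /=; rewrite lee_fin !ger0_norm ?addr_ge0 ?sqr_ge0 //.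
  by rewrite lerDr sqr_ge0.
have Q : quantization P f u = fun y => Complex (G P f a y) (G P f b y).
  apply/funext => y; rewrite /quantization /cintegral /G.
  congr Complex; apply: eq_Rintegral => x _; rewrite /a /b;
    case: (u x) => p q /=; ring.
rewrite /cinner Q /cintegral.
have E1 : (fun y => complex.Re (conjc (Complex (G P f a y) (G P f b y)) * u y)) =
          (fun y => G P f a y * a y + G P f b y * b y).
  by apply/funext => y; rewrite /a /b; case: (u y) => p q /=; ring.
have E2 : (fun y => complex.Im (conjc (Complex (G P f a y) (G P f b y)) * u y)) =
          (fun y => G P f a y * b y - G P f b y * a y).
  by apply/funext => y; rewrite /a /b; case: (u y) => p q /=; ring.
rewrite E1 E2 lecE /=.
have jaa := int_Gh P f mf if2 a a ma ia2 ma ia2.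
have jbb := int_Gh P f mf if2 b b mb ib2 mb ib2.
have jab := int_Gh P f mf if2 a b ma ia2 mb ib2.
have jba := int_Gh P f mf if2 b a mb ib2 ma ia2.
rewrite (RintegralB measurableT jab jba) (RintegralD measurableT jaa jbb).
rewrite (Gsym P f mf if2 a b ma ia2 mb ib2) subrr eqxx /=.
by rewrite addr_ge0 // Gpos.
Qed.
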